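(* Let $f=\sum_{|\alpha|=d}c_\alpha x^\alpha\in\mathbb{R}[x_1,\dots,x_n]$ be a form of degree $d\ge1$ with $c_\alpha>0$ for all $\alpha\in\mathbb{Z}_{\ge0}^n$ with $|\alpha|=d$. Let $A=\{p/f^r: r\ge0,\ p\in\mathbb{R}[x_1,\dots,x_n] \text{ homogeneous of degree } dr \text{ (or zero)}\}\subset\mathbb{R}(x_1,\dots,x_n)$, and let $T\subset A$ be the subsemiring generated by $\mathbb{R}_{\ge0}$ and the elements $y_\alpha=x^\alpha/f$ ($|\alpha|=d$). Then $T$ is archimedean, i.e. for every $a\in A$ there is $N\in\mathbb{Z}$ with $N+a\in T$.
   Context: A semiring is a subset containing $0,1$ and closed under addition and multiplication. $T$ consists exactly of the fractions $p/f^r$ with $r\ge0$ and $p$ homogeneous of degree $dr$ with all coefficients nonnegative. *)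

(* Defs.v *)
From HB Require Import structures.
From mathcomp Require Import all_boot all_order all_algebra.
Set Implicit Arguments. Unset Strict Implicit. Unset Printing Implicit Defensive.
Import Order.TTheory GRing.Theory Num.Theory.
Local Open Scope ring_scope.

Definition mon (n : nat) := {ffun 'I_n -> nat}.
Definition mdeg n (a : mon n) : nat := (\sum_i a i)%N.

(* A (formal) polynomial in x_1..x_n over R is given by its coefficient
   function alpha |-> c_alpha.  We only ever use homogeneous ones (which are
   automatically finitely supported), so no finiteness condition is needed. *)
Definition mpoly (R : Type) n := mon n -> R.

Section MPoly.
Variables (R : comNzRingType) (n : nat).

Definition homog (k : nat) (p : mpoly R n) : Prop :=
  forall a : mon n, mdeg a <> k -> p a = 0.

Definition madd (p q : mpoly R n) : mpoly R n := fun a => p a + q a.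

Definition mmul (p q : mpoly R n) : mpoly R n := fun a =>
  \sum_(b : {ffun 'I_n -> 'I_(mdeg a).+1} | [forall i, (b i <= a i)%N])
     p [ffun i => nat_of_ord (b i)] * q [ffun i => (a i - b i)%N].

Definition mconst (c : R) : mpoly R n := fun a => if mdeg a == 0%N then c else 0.

Definition mmono (al : mon n) : mpoly R n := fun a => if a == al then 1 else 0.

Definition mpow (p : mpoly R n) (r : nat) : mpoly R n := iter r (mmul p) (mconst 1).

(* Fractions p / f^r are represented by pairs (p, r). *)
Definition mfrac := (mpoly R n * nat)%type.

Definition inA (d : nat) (a : mfrac) : Prop := homog (d * a.2) a.1.

Definition frac_eq (f : mpoly R n) (a b : mfrac) : Prop :=
  mmul a.1 (mpow f b.2) = mmul b.1 (mpow f a.2).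

Definition fadd (f : mpoly R n) (a b : mfrac) : mfrac :=
  (madd (mmul a.1 (mpow f b.2)) (mmul b.1 (mpow f a.2)), (a.2 + b.2)%N).

Definition fmul (a b : mfrac) : mfrac := (mmul a.1 b.1, (a.2 + b.2)%N).

End MPoly.

(* T = subsemiring of A generated by R_{>=0} and y_alpha = x^alpha / f,
   |alpha| = d; taken up to equality of rational functions. *)
Inductive inT (R : numDomainType) (n d : nat) (f : mpoly R n) : mfrac R n -> Prop :=
| T_const (c : R) : 0 <= c -> inT d f (@mconst R n c, 0%N)
| T_y (al : mon n) : mdeg al = d -> inT d f (@mmono R n al, 1%N)
| T_add a b : inT d f a -> inT d f b -> inT d f (fadd f a b)
| T_mul a b : inT d f a -> inT d f b -> inT d f (fmul a b)
| T_eq a b : inT d f a -> inA d b -> frac_eq f a b -> inT d f b.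

(* Main.v *)
Require Import Defs.
From HB Require Import structures.
From mathcomp Require Import all_boot all_order all_algebra.
From mathcomp Require Import ring lra.
From Stdlib Require Import FunctionalExtensionality.
Set Implicit Arguments. Unset Strict Implicit. Unset Printing Implicit Defensive.
Import Order.TTheory GRing.Theory Num.Theory.
Local Open Scope ring_scope.

Section Aux.
Variables (R : archiRealFieldType) (n : nat).

Definition mm (a b : mon n) : mon n := [ffun i => (a i + b i)%N].
Definition z0 : mon n := [ffun _ => 0%N].
Definition lin (s : seq (R * mon n)) : mpoly R n :=
  fun a => \sum_(x <- s) x.1 * mmono R x.2 a.

Lemma leq_mdeg (a : mon n) i : (a i <= mdeg a)%N.
Proof. rewrite /mdeg (bigD1 i) //=; exact: leq_addr. Qed.

Lemma mdeg_mm a b : mdeg (mm a b) = (mdeg a + mdeg b)%N.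
Proof. rewrite /mdeg /mm -big_split /=; apply: eq_bigr => i _; by rewrite ffunE. Qed.

Lemma mmA a b c : mm (mm a b) c = mm a (mm b c).
Proof. apply/ffunP => i; by rewrite !ffunE addnA. Qed.

Lemma mdeg0E (a : mon n) : (mdeg a == 0%N) = (a == z0).
Proof.
apply/idP/eqP => [h|->].
- apply/ffunP => i; rewrite ffunE; apply/eqP; rewrite -leqn0 -(eqP h); exact: leq_mdeg.
- rewrite /mdeg big1 // => i _; by rewrite ffunE.
Qed.

Definition delta (i : 'I_n) : mon n := [ffun j => nat_of_bool (j == i)].

Lemma mdeg_delta i : mdeg (delta i) = 1%N.
Proof.
rewrite /mdeg (bigD1 i) //= ffunE eqxx big1 // => j hj; by rewrite ffunE (negbTE hj).
Qed.

Lemma split_mon (be : mon n) k : (k <= mdeg be)%N ->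
  exists al : mon n, (forall i, al i <= be i)%N /\ mdeg al = k.
Proof.
elim: k => [|k IH] hk.
  exists z0; split => [i|]; first by rewrite ffunE.
  by apply/eqP; rewrite mdeg0E.
have [al [hle hdeg]] := IH (ltnW hk).
have [i hi] : exists i, (al i < be i)%N.
  apply/existsP; move: hk; apply: contraLR; rewrite negb_exists => /forallP h.
  rewrite -ltnNge ltnS -hdeg /mdeg; apply: leq_sum => i _; by rewrite leqNgt h.
exists (mm al (delta i)); split.
  move=> j; rewrite !ffunE; case: eqP => [->|_]; by rewrite ?addn1 ?addn0 ?hle.
by rewrite mdeg_mm mdeg_delta hdeg addn1.
Qed.

Lemma mm_sub (al be : mon n) : (forall i, al i <= be i)%N ->
  mm al [ffun i => (be i - al i)%N] = be.
Proof. move=> h; apply/ffunP => i; rewrite !ffunE subnKC //. Qed.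

Definition Sk k : seq (mon n) :=
  undup [seq m <- map (fun b : {ffun 'I_n -> 'I_k.+1} => [ffun i => nat_of_ord (b i)] : mon n)
           (enum {ffun 'I_n -> 'I_k.+1}) | mdeg m == k].

Lemma mem_Sk k m : (m \in Sk k) = (mdeg m == k).
Proof.
rewrite mem_undup mem_filter; case h: (mdeg m == k) => //=.
apply/mapP; exists [ffun i => inord (m i)]; first by rewrite mem_enum.
apply/ffunP => i; rewrite !ffunE inordK // ltnS -(eqP h); exact: leq_mdeg.
Qed.

Lemma uniq_Sk k : uniq (Sk k).
Proof. exact: undup_uniq. Qed.

Lemma homog_lin k (p : mpoly R n) : homog k p -> p = lin [seq (p m, m) | m <- Sk k].
Proof.
move=> hp; apply: functional_extensionality => a; rewrite /lin big_map /=.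
case ha: (mdeg a == k).
  have ain : a \in Sk k by rewrite mem_Sk.
  rewrite (bigD1_seq a) ?uniq_Sk //= /mmono eqxx mulr1 big1 ?addr0 // => m /negbTE hm.
  by rewrite eq_sym hm mulr0.
rewrite hp; last by move/eqP; rewrite ha.
rewrite big1_seq // => m /andP [_]; rewrite mem_Sk => hm.
rewrite /mmono; case: eqP => [e|_]; last by rewrite mulr0.
by move: ha; rewrite e hm.
Qed.

Lemma homog_ex k (p : mpoly R n) : homog k p -> exists s, p = lin s.
Proof. move=> h; eexists; exact: homog_lin h. Qed.

Lemma lin_homog k s : (forall x, x \in s -> mdeg x.2 = k) -> homog k (lin s).
Proof.
move=> h a ha; rewrite /lin big1_seq // => x /andP [_ xs]; rewrite /mmono.
case: eqP => [e|_]; last by rewrite mulr0.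
by exfalso; apply: ha; rewrite e h.
Qed.

Lemma mmul_mono al be a : mmul (mmono R al) (mmono R be) a = mmono R (mm al be) a.
Proof.
rewrite /mmul {3}/mmono.
case: eqP => [->|ne].
  have hal : forall i, (al i < (mdeg (mm al be)).+1)%N.
    by move=> i; rewrite ltnS mdeg_mm; exact: leq_trans (leq_mdeg al i) (leq_addr _ _).
  pose b0 : {ffun 'I_n -> 'I_(mdeg (mm al be)).+1} := [ffun i => Ordinal (hal i)].
  have hb0 : [forall i, (b0 i <= mm al be i)%N].
    by apply/forallP => i; rewrite !ffunE /=; exact: leq_addr.
  rewrite (bigD1 b0) //= big1 ?addr0.
    rewrite /mmono.
    have -> : [ffun i => nat_of_ord (b0 i)] = al by apply/ffunP => i; rewrite !ffunE.
    have -> : [ffun i => (mm al be i - b0 i)%N] = be.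
      by apply/ffunP => i; rewrite !ffunE /= addKn.
    by rewrite !eqxx mulr1.
  move=> b /andP [hb nb]; rewrite /mmono; case: eqP => [e|]; last by rewrite mul0r.
  exfalso; move/eqP: nb; apply; apply/ffunP => i; apply: val_inj.
  move: (congr1 (fun g : mon n => g i) e); rewrite !ffunE /= => ->; done.
rewrite big1 // => b hb; rewrite /mmono.
case: eqP => [e1|]; last by rewrite mul0r.
case: eqP => [e2|]; last by rewrite mulr0.
exfalso; apply: ne; apply/ffunP => i.
rewrite ffunE -e1 -e2 !ffunE subnKC //; exact: (forallP hb i).
Qed.

Lemma mmul_mono_fun al be : mmul (mmono R al) (mmono R be) = mmono R (mm al be).
Proof. apply: functional_extensionality => a; exact: mmul_mono. Qed.


Lemma lin_mul s t : mmul (lin s) (lin t) =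
  lin [seq (x.1 * y.1, mm x.2 y.2) | x <- s, y <- t].
Proof.
apply: functional_extensionality => a; rewrite [in RHS]/lin big_allpairs_dep /=.
have E : forall x y : R * mon n, x.1 * y.1 * mmono R (mm x.2 y.2) a =
  \sum_(b : {ffun 'I_n -> 'I_(mdeg a).+1} | [forall i, (b i <= a i)%N])
    x.1 * y.1 * (mmono R x.2 [ffun i => nat_of_ord (b i)] *
                 mmono R y.2 [ffun i => (a i - b i)%N]).
  by move=> x y; rewrite -mmul_mono /mmul mulr_sumr.
rewrite (eq_bigr _ (fun x _ => eq_bigr _ (fun y _ => E x y))).
under eq_bigr do rewrite exchange_big.
rewrite exchange_big /mmul; apply: eq_bigr => b _.
rewrite /lin mulr_suml; apply: eq_bigr => x _; rewrite mulr_sumr.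
apply: eq_bigr => y _ /=; ring.
Qed.

Lemma lin_mulA s t u : mmul (mmul (lin s) (lin t)) (lin u) =
  mmul (lin s) (mmul (lin t) (lin u)).
Proof.
rewrite !lin_mul; apply: functional_extensionality => a.
rewrite /lin !big_allpairs_dep /=.
apply: eq_bigr => x _; rewrite big_allpairs_dep /=.
apply: eq_bigr => y _; apply: eq_bigr => z _ /=.
by rewrite mmA mulrA.
Qed.

Lemma mmulA_h k l m (p q r : mpoly R n) : homog k p -> homog l q -> homog m r ->
  mmul (mmul p q) r = mmul p (mmul q r).
Proof.
move=> /homog_ex [s ->] /homog_ex [t ->] /homog_ex [u ->]; exact: lin_mulA.
Qed.

Lemma mmul_homog k l (p q : mpoly R n) : homog k p -> homog l q ->
  homog (k + l) (mmul p q).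
Proof.
move=> hp hq; rewrite (homog_lin hp) (homog_lin hq) lin_mul.
apply: lin_homog => w /allpairsP [[x y] [/= /mapP [m1 m1s ->] /mapP [m2 m2s ->] ->]] /=.
by rewrite mdeg_mm; move: m1s m2s; rewrite !mem_Sk => /eqP-> /eqP->.
Qed.

Lemma mconst_lin c : @mconst R n c = lin [:: (c, z0)].
Proof.
apply: functional_extensionality => a; rewrite /mconst /lin big_seq1 /= /mmono -mdeg0E.
by case: (mdeg a == 0%N); rewrite ?mulr1 ?mulr0.
Qed.

Lemma mm0l a : mm z0 a = a. Proof. by apply/ffunP => i; rewrite !ffunE. Qed.
Lemma mm0r a : mm a z0 = a. Proof. by apply/ffunP => i; rewrite !ffunE addn0. Qed.

Lemma mmul_constl c k (p : mpoly R n) : homog k p ->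
  mmul (@mconst R n c) p = fun a => c * p a.
Proof.
move=> /homog_ex [s ->]; rewrite mconst_lin lin_mul.
apply: functional_extensionality => a.
rewrite /lin big_allpairs_dep big_seq1 mulr_sumr; apply: eq_bigr => y _ /=.
by rewrite mm0l mulrA.
Qed.

Lemma mmul_constr c k (p : mpoly R n) : homog k p ->
  mmul p (@mconst R n c) = fun a => c * p a.
Proof.
move=> /homog_ex [s ->]; rewrite mconst_lin lin_mul.
apply: functional_extensionality => a.
rewrite /lin big_allpairs_dep mulr_sumr; apply: eq_bigr => y _ /=.
by rewrite big_seq1 /= mm0r; ring.
Qed.

Lemma mmulDl (p q r : mpoly R n) : mmul (madd p q) r = madd (mmul p r) (mmul q r).
Proof.
apply: functional_extensionality => a; rewrite /mmul /madd -big_split.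
by apply: eq_bigr => b _; rewrite mulrDl.
Qed.

Lemma madd_homog k (p q : mpoly R n) : homog k p -> homog k q -> homog k (madd p q).
Proof. by move=> hp hq a ha; rewrite /madd hp // hq // addr0. Qed.

Lemma mmono_homog k (be : mon n) : mdeg be = k -> homog k (mmono R be).
Proof. move=> h a ha; rewrite /mmono; case: eqP => // e; by case: ha; rewrite e. Qed.


Section F.
Variables (d : nat) (f : mpoly R n).
Hypotheses (hf : homog d f) (hpos : forall al : mon n, mdeg al = d -> 0 < f al).

Lemma mpow_homog r : homog (d * r) (mpow f r).
Proof.
elim: r => [|r IH].
  rewrite muln0 => a ha; rewrite /mpow /= /mconst; by case: eqP => // /ha.
rewrite mulnS; exact: mmul_homog hf IH.
Qed.

Lemma mmul_unitl k (p : mpoly R n) : homog k p -> mmul (@mconst R n 1) p = p.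
Proof.
move=> hp; rewrite (mmul_constl _ hp); apply: functional_extensionality => a; exact: mul1r.
Qed.

Lemma mpow_add r s : mpow f (r + s) = mmul (mpow f r) (mpow f s).
Proof.
elim: r => [|r IH]; first by rewrite add0n (mmul_unitl (mpow_homog (r:=s))).
rewrite addSn.
change (mmul f (mpow f (r + s)) = mmul (mmul f (mpow f r)) (mpow f s)).
by rewrite IH (mmulA_h hf (mpow_homog (r:=r)) (mpow_homog (r:=s))).
Qed.

Lemma f_ge0 a : 0 <= f a.
Proof.
case: (boolP (mdeg a == d)) => [/eqP /hpos /ltW //|/eqP /hf ->]; exact: lexx.
Qed.

Lemma mpow_ge0 r a : 0 <= mpow f r a.
Proof.
elim: r a => [|r IH] a.
  by rewrite /mpow /= /mconst; case: ifP => _ //; exact: ler01.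
change (0 <= mmul f (mpow f r) a); rewrite /mmul.
apply: sumr_ge0 => b _; exact: mulr_ge0 (f_ge0 _) (IH _).
Qed.

Lemma sub_deg (al be : mon n) (hle : forall i, (al i <= be i)%N) :
  mdeg [ffun i => (be i - al i)%N] = (mdeg be - mdeg al)%N.
Proof. by rewrite -{2}(mm_sub hle) mdeg_mm addKn. Qed.

Lemma mpow_gt0 r a : mdeg a = (d * r)%N -> 0 < mpow f r a.
Proof.
elim: r a => [|r IH] a ha.
  by rewrite /mpow /= /mconst ha muln0 eqxx ltr01.
change (0 < mmul f (mpow f r) a); rewrite /mmul.
have hk : (d <= mdeg a)%N by rewrite ha mulnS leq_addr.
have [al [hle hdeg]] := split_mon hk.
have hga : mdeg [ffun i => (a i - al i)%N] = (d * r)%N.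
  by rewrite sub_deg // ha hdeg mulnS addKn.
have hb : forall i, (al i < (mdeg a).+1)%N.
  by move=> i; rewrite ltnS; exact: leq_trans (hle i) (leq_mdeg a i).
pose b0 : {ffun 'I_n -> 'I_(mdeg a).+1} := [ffun i => Ordinal (hb i)].
rewrite (bigD1 b0) /=; last by apply/forallP => i; rewrite ffunE /= hle.
have -> : [ffun i => nat_of_ord (b0 i)] = al by apply/ffunP => i; rewrite !ffunE.
have -> : [ffun i => (a i - b0 i)%N] = [ffun i => (a i - al i)%N].
  by apply/ffunP => i; rewrite !ffunE.
apply: (lt_le_trans (mulr_gt0 (hpos hdeg) (IH _ hga))).
rewrite lerDl; apply: sumr_ge0 => b _; exact: mulr_ge0 (f_ge0 _) (mpow_ge0 _ _).
Qed.

Lemma mono_T r (be : mon n) : mdeg be = (d * r)%N -> inT d f (mmono R be, r).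
Proof.
elim: r be => [|r IH] be hbe.
  have -> : mmono R be = mconst 1.
    rewrite muln0 in hbe; have -> : be = z0 by apply/eqP; rewrite -mdeg0E hbe.
    apply: functional_extensionality => a; by rewrite /mmono /mconst mdeg0E.
  exact: T_const ler01.
have hk : (d <= mdeg be)%N by rewrite hbe mulnS leq_addr.
have [al [hle hdeg]] := split_mon hk.
have hga : mdeg [ffun i => (be i - al i)%N] = (d * r)%N.
  by rewrite sub_deg // hbe hdeg mulnS addKn.
have E : mmono R be = mmul (mmono R al) (mmono R [ffun i => (be i - al i)%N]).
  by rewrite mmul_mono_fun mm_sub.
rewrite E; exact: (T_mul (T_y f hdeg) (IH _ hga)).
Qed.

Lemma lin_T r s : (forall x, x \in s -> 0 <= x.1 /\ mdeg x.2 = (d * r)%N) ->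
  inT d f (lin s, r).
Proof.
have hF := mpow_homog (r:=r).
elim: s => [|x s IH] hs.
  apply: (T_eq (a := (mconst 0, 0%N)) (T_const d f (lexx 0))).
    by apply: lin_homog.
  rewrite /frac_eq /= (mmul_constl _ hF); apply: functional_extensionality => a.
  by rewrite mul0r /mmul big1 // => b _; rewrite /lin big_nil mul0r.
have [hx1 hx2] := hs x (mem_head _ _).
have hs' : forall y, y \in s -> 0 <= y.1 /\ mdeg y.2 = (d * r)%N.
  by move=> y ys; apply: hs; rewrite in_cons ys orbT.
pose t := fun a => x.1 * mmono R x.2 a.
have ht : homog (d * r) t by move=> a ha; rewrite /t (mmono_homog hx2) // mulr0.
have hL : homog (d * r) (lin s) by apply: lin_homog => y /hs' [].
have Tt : inT d f (t, r).
  have := T_mul (T_const d f hx1) (mono_T hx2).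
  by rewrite /fmul /= (mmul_constl _ (mmono_homog hx2)) add0n.
have -> : lin (x :: s) = madd t (lin s).
  by apply: functional_extensionality => a; rewrite /lin big_cons.
apply: (T_eq (T_add Tt (IH hs'))); first exact: madd_homog.
rewrite /frac_eq /fadd /= mpow_add !mmulDl.
by rewrite (mmulA_h ht hF hF) (mmulA_h hL hF hF).
Qed.

End F.

Lemma exists_bound (s : seq (mon n)) (g : mon n -> R) :
  exists N : nat, forall m, m \in s -> g m <= N%:R.
Proof.
elim: s => [|x s [N hN]]; first by exists 0%N.
exists (N + Num.Def.archi_bound `|g x|)%N => m; rewrite in_cons => /orP [/eqP ->|ms].
  have h := archi_boundP (normr_ge0 (g x)).
  rewrite natrD; have := ler_norm (g x); have : (0 <= N%:R :> R) by exact: ler0n.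
  move: (Num.Def.archi_bound _)%:R h => X h; lra.
have := hN m ms; rewrite natrD; have : (0 <= (Num.Def.archi_bound `|g x|)%:R :> R).
  exact: ler0n.
move: (Num.Def.archi_bound _)%:R => X; lra.
Qed.

End Aux.

Theorem mainTheorem6 (R : archiRealFieldType) (n d : nat) (f : mpoly R n)
  (hn : (0 < n)%N) (hd : (1 <= d)%N)
  (hf : homog d f) (hpos : forall al : mon n, mdeg al = d -> 0 < f al) :
  forall a : mfrac R n, inA d a ->
    exists N : int, inT d f (fadd f (@mconst R n (N%:~R), 0%N) a).
Proof.
move=> [p r] /= hp.
have hF := mpow_homog hf (r:=r).
have [N hN] := exists_bound (Sk n (d * r)) (fun m => `|p m| / mpow f r m).
exists (Posz N).
rewrite /fadd /= (mmul_constl _ hF).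
rewrite /inA /= in hp.
rewrite (mmul_constr _ hp) add0n.
set Q := madd _ _.
have hQ : homog (d * r) Q.
  apply: madd_homog => a ha; first by rewrite hF // mulr0.
  by rewrite hp // mulr0.
rewrite (homog_lin hQ); apply: lin_T => // x /mapP [m ms ->] /=.
split; last by move: ms; rewrite mem_Sk => /eqP.
have hm := hN m ms; move: ms; rewrite mem_Sk => /eqP hdm.
have Fpos := mpow_gt0 hf hpos hdm.
rewrite /= ler_pdivrMr // in hm.
rewrite /Q /madd.
change ((Posz N)%:~R) with (N%:R : R).
have := ler_norm (- p m); rewrite normrN.
move: (N%:R * mpow f r m) hm => X hm; lra.
Qed.
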